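(* With $S_\rho$ the globally defined, Lipschitz (in $u$), $p$-periodic cut-off time-dependent semiflow of the lemma above, set $\Phi_t:=S_\rho(t+p,t;\cdot):X\to X$ for $t\in\mathbb{R}$, and for $\gamma>0$ define $G_t(\gamma)=\{u\in X:$ there is a negative semiorbit $\{u_m\}_{m\le0}$ of $\Phi_t$ (i.e. $\Phi_t(u_m)=u_{m+1}$ for $m\le -1$) with $u_0=u$ and $\limsup_{m\to-\infty}\frac{1}{|m|}\ln\|u_m\|\le-\ln\gamma\}$. Then $S_\rho(t,s;G_s(\gamma))=G_t(\gamma)$ for all $t\ge s$.
   Context: $X=C([-\tau,0];\mathbb{R}^n)$ with sup norm. $S_\rho$ is the time-dependent semiflow defined by the cut-off integral equation $S_\rho(t,s;u)=T_0(t-s)u+\iota^{-1}\int_s^t T_0^{\odot*}(t-r)[B(r)S_\rho(r,s;u)+R_{\rho,r}(r,S_\rho(r,s;u))]dr$ (notation as in the periodicity lemma: shift semigroup $T_0$, sun-star extension, embedding $\iota u=(u(0),u)$, linear part $B(t)=D_2F(t,0)$ and cut-off nonlinearity $R_{\rho,r}$ of a $p$-periodic $C^k$ delay equation with $f(t,0)=0$), with $\rho>0$ small enough that $S_\rho$ is defined on $\{t\ge s\}\times X$, $S_\rho(t,s;\cdot)$ is Lipschitz on $X$, and $S_\rho(t+p,s+p;\cdot)=S_\rho(t,s;\cdot)$. The semiflow property $S_\rho(t,r;S_\rho(r,s;u))=S_\rho(t,s;u)$ for $s\le r\le t$ holds. It is moreover assumed (as holds for the invariant manifolds produced by the Lipschitz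 invariant manifold theorem for $\Phi_t$) that $G_{t}(\gamma)=G_{t-jp}(\gamma)$ for $j\in\mathbb{N}$, which follows from $\Phi_{t-jp}=\Phi_t$. *)

(* Defs.v *)
From mathcomp Require Import all_boot all_order all_algebra.
From mathcomp Require Import all_classical all_reals all_analysis.
Set Implicit Arguments. Unset Strict Implicit. Unset Printing Implicit Defensive.
Import Order.TTheory GRing.Theory Num.Theory.
Import numFieldNormedType.Exports.
Local Open Scope classical_set_scope.
Local Open Scope ring_scope.

Definition Phi {R : realType} {X : normedModType R}
  (S : R -> R -> X -> X) (p t : R) : X -> X := S (t + p) t.

(* Negative semiorbit of a map f through u, indexed by k = -m >= 0:
   w k = u_{-k}, w 0 = u, f (u_{m}) = u_{m+1} for m <= -1. *)
Definition neg_semiorbit {X : Type} (f : X -> X) (u : X) (w : nat -> X) : Prop :=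
  w 0%N = u /\ forall k : nat, f (w k.+1) = w k.

Definition growth_term {R : realType} {X : normedModType R}
  (w : nat -> X) (k : nat) : \bar R :=
  if `|w k| == 0 then -oo%E else ((ln `|w k|) / k%:R)%:E.

Definition Gset {R : realType} {X : normedModType R}
  (S : R -> R -> X -> X) (p t gamma : R) : set X :=
  [set u | exists w : nat -> X, neg_semiorbit (Phi S p t) u w /\
     (limn_esup (growth_term w) <= (- ln gamma)%:E)%E].

Definition lipschitz_map {R : realType} {X : normedModType R} (f : X -> X) : Prop :=
  exists L : R, forall u v : X, `|f u - f v| <= L * `|u - v|.

(* Main.v *)
Require Import Defs.
From mathcomp Require Import all_boot all_order all_algebra.
From mathcomp Require Import all_classical all_reals all_analysis.
From mathcomp Require Import ring lra.
Import Order.TTheory GRing.Theory Num.Theory.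
Import numFieldNormedType.Exports.
Local Open Scope classical_set_scope.
Local Open Scope ring_scope.


Definition expbd {R : realType} {X : normedModType R} (w : nat -> X) (c : R) : Prop :=
  forall e : R, 0 < e -> exists N : nat, forall k : nat, (N <= k)%N ->
    `|w k| <= expR (k%:R * (c + e)).

Lemma esup_expbd {R : realType} {X : normedModType R} (w : nat -> X) (c : R) :
  (limn_esup (growth_term w) <= c%:E)%E -> expbd w c.
Proof.
move=> H e e0.
have : (ereal_inf [set ereal_sup (growth_term w @` V) | V in \oo] < (c + e)%:E)%E.
  apply: (le_lt_trans H); rewrite lte_fin; by rewrite ltrDl.
move=> /ereal_inf_lt [y [V [N _ NV] <-]] hy.
exists N.+1 => k Nk.
have gk : (growth_term w k <= ereal_sup (growth_term w @` V))%E.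
  apply: ereal_sup_ubound; exists k => //; apply: NV; exact: ltnW.
have := le_lt_trans gk hy; rewrite /growth_term.
case: eqP => [-> _|/eqP nz]; first exact/ltW/expR_gt0.
rewrite lte_fin => hl.
have k0 : (0 < k%:R :> R) by rewrite ltr0n (leq_trans _ Nk).
have : ln `|w k| <= k%:R * (c + e).
  by rewrite -ler_pdivrMl // mulrC; apply: ltW.
by rewrite -ler_expR lnK // posrE lt0r nz normr_ge0.
Qed.

Lemma expbd_esup {R : realType} {X : normedModType R} (w : nat -> X) (c : R) :
  expbd w c -> (limn_esup (growth_term w) <= c%:E)%E.
Proof.
move=> H; apply/lee_addgt0Pr => e e0.
have [N HN] := H e e0.
apply: (@le_trans _ _ (ereal_sup (growth_term w @` [set k | (N.+1 <= k)%N]))).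
  apply: ereal_inf_lbound; exists [set k | (N.+1 <= k)%N] => //; exists N.+1 => //.
apply: ge_ereal_sup => _ [k /= Nk <-]; rewrite /growth_term.
case: eqP => [_|/eqP nz]; first exact: leNye.
have k0 : (0 < k%:R :> R) by rewrite ltr0n (leq_trans _ Nk).
rewrite -EFinD lee_fin ler_pdivrMr // mulrC.
rewrite -(expRK (k%:R * (c + e))) ler_ln ?posrE ?lt0r ?nz ?normr_ge0 ?expR_gt0 //.
apply: HN; exact: ltnW.
by rewrite -lt0r expR_gt0.
Qed.

Lemma expbd_const {R : realType} {X : normedModType R} (w : nat -> X) (c : R) :
  (forall e : R, 0 < e -> exists C : R, 0 < C /\ exists N : nat, forall k : nat, (N <= k)%N ->
    `|w k| <= C * expR (k%:R * (c + e))) -> expbd w c.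
Proof.
move=> H e e0.
have e20 : 0 < e / 2 by rewrite divr_gt0.
have [C [C0 [N HN]]] := H (e / 2) e20.
exists (maxn N (Num.Def.truncn (`|ln C| / (e / 2))).+1) => k.
rewrite geq_max => /andP [Nk Tk].
apply: (le_trans (HN k Nk)).
have -> : k%:R * (c + e) = k%:R * (e / 2) + k%:R * (c + e / 2).
  by rewrite -mulrDr; congr (_ * _); rewrite addrCA -splitr.
rewrite expRD ler_pM2r ?expR_gt0 //.
rewrite -{1}(lnK (x := C)) ?posrE // ler_expR.
apply: (le_trans (ler_norm _)).
rewrite -ler_pdivrMr //.
apply: ltW; apply: (lt_le_trans (truncnS_gt _)).
by rewrite ler_nat.
Qed.

Theorem mainTheorem3 (R : realType) (X : normedModType R)
  (S : R -> R -> X -> X) (p : R) (hp : 0 < p)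
  (S_id : forall s (u : X), S s s u = u)
  (S_semiflow : forall s r t (u : X), s <= r -> r <= t -> S t r (S r s u) = S t s u)
  (S_lip : forall s t, s <= t -> lipschitz_map (S t s))
  (S_zero : forall s t, s <= t -> S t s 0 = 0)
  (S_per : forall s t (u : X), s <= t -> S (t + p) (s + p) u = S t s u)
  (gamma : R) (hgamma : 0 < gamma) :
  forall s t : R, s <= t -> S t s @` Gset S p s gamma = Gset S p t gamma.
Proof.
have p0 : 0 <= p by exact: ltW.
have L1 : forall (j : nat) s t u, s <= t ->
    S (t + j%:R * p) (s + j%:R * p) u = S t s u.
  elim=> [|j IH] s t u st; first by rewrite !mul0r !addr0.
  have -> : t + j.+1%:R * p = (t + j%:R * p) + p by rewrite -nat1r mulrDl mul1r addrA addrAC.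
  have -> : s + j.+1%:R * p = (s + j%:R * p) + p by rewrite -nat1r mulrDl mul1r addrA addrAC.
  by rewrite S_per ?lerD2r // IH.
have Pper : forall (j : nat) b x, S (b + j%:R * p + p) (b + j%:R * p) x = S (b + p) b x.
  move=> j b x; rewrite addrAC; apply: L1; by rewrite lerDl.
have L2 : forall a b x, a <= b -> S (b + p) b (S b a x) = S b a (S (a + p) a x).
  move=> a b x ab.
  rewrite S_semiflow ?lerDl //.
  rewrite -(S_per a b _ ab) S_semiflow ?lerDl ?lerD2r //.
have Lb : forall s t, s <= t -> exists C : R, 0 < C /\ forall x, `|S t s x| <= C * `|x|.
  move=> s t st; have [L HL] := S_lip s t st.
  exists (Num.max L 1); split; first by rewrite lt_max ltr01 orbT.
  move=> x; have := HL x 0; rewrite S_zero // !subr0 => h.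
  apply: (le_trans h); apply: ler_wpM2r => //; by rewrite le_max lexx.
set c := - ln gamma.
move=> s t st; apply/seteqP; split.
- move=> _ [u [w [[w0 wor] wg]] <-].
  exists (fun k => S t s (w k)); split.
    split; first by rewrite w0.
    move=> k; rewrite /Phi L2 //; congr (S t s); exact: wor.
  apply: expbd_esup; apply: expbd_const => e e0.
  have [N HN] := @esup_expbd _ _ _ _ wg e e0.
  have [C [C0 HC]] := Lb s t st.
  exists C; split => //; exists N => k Nk.
  apply: (le_trans (HC _)); rewrite ler_pM2l //; exact: HN.
- move=> v [w [[w0 wor] wg]].
  set j := (Num.Def.truncn ((t - s) / p)).+1.
  have jp : t - s <= j%:R * p.
    rewrite -ler_pdivrMr //; apply: ltW; exact: truncnS_gt.
  set a := t - j%:R * p.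
  have a_s : a <= s by rewrite /a lerBlDr addrC -lerBlDr.
  have a_t : a <= t by exact: le_trans a_s st.
  have PhiA : forall x, S (a + p) a x = S (t + p) t x.
    by move=> x; rewrite -(Pper j a x) /a subrK.
  have L3 : forall (i k : nat), S t (t - i%:R * p) (w (i + k)%N) = w k.
    elim=> [|i IH] k; first by rewrite mul0r subr0 S_id add0n.
    set b := t - i.+1%:R * p.
    have bi : b + p = t - i%:R * p.
      by rewrite /b -nat1r mulrDl mul1r; ring.
    have b1 : b <= t - i%:R * p by rewrite -bi lerDl.
    have b2 : t - i%:R * p <= t by rewrite lerBlDr lerDl mulr_ge0.
    rewrite -(S_semiflow b (t - i%:R * p) t) // -bi.
    have -> : S (b + p) b (w (i.+1 + k)%N) = S (t + p) t (w (i.+1 + k)%N).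
      by rewrite -(Pper i.+1 b) /b subrK.
    rewrite addSn; have := wor (i + k)%N; rewrite /Phi => ->.
    by rewrite bi IH.
  exists (S s a (w j)).
    exists (fun k => S s a (w (j + k)%N)); split.
      split; first by rewrite addn0.
      move=> k; rewrite /Phi L2 // PhiA addnS; have := wor (j + k)%N; rewrite /Phi => -> //.
    apply: expbd_esup; apply: expbd_const => e e0.
    have [N HN] := @esup_expbd _ _ _ _ wg e e0.
    have [C [C0 HC]] := Lb a s a_s.
    exists (C * expR (j%:R * (c + e))); split; first by rewrite mulr_gt0 ?expR_gt0.
    exists N => k Nk.
    apply: (le_trans (HC _)); rewrite -mulrA ler_pM2l // -expRD -mulrDl -natrD.
    apply: HN; exact: leq_trans Nk (leq_addl _ _).
  by rewrite S_semiflow // -w0 -(L3 j 0%N) addn0.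
Qed.
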